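(* Let $A$ be a finite alphabet with at least two letters. No cellular automaton $F$ on $A^{\mathbb N}$ is expansive with respect to the Feldman pseudo-metric; that is, for every $\varepsilon>0$ there exist $x,y\in A^{\mathbb N}$ with $\mathfrak d_L(x,y)>0$ such that $\mathfrak d_L(F^t(x),F^t(y))\le\varepsilon$ for all $t\in\mathbb N$.
   Context: A cellular automaton with diameter $\delta\ge1$ is $F:A^{\mathbb N}\to A^{\mathbb N}$ with $F(x)_i=f(x_{[i,i+\delta)})$ for a local rule $f:A^\delta\to A$, where $x_{[i,j)}=x_i\cdots x_{j-1}$. The Levenshtein distance is $d_L(u,v)=\frac{|u|+|v|}{2}-\ell$, $\ell$ the length of a longest common subsequence of $u,v$; the Feldman pseudo-metric is $\mathfrak d_L(x,y)=\limsup_{l\to\infty}d_L(x_{[0,l)},y_{[0,l)})/l$. $F$ is expansive if $\exists\varepsilon>0$ such that for all $x,y$ with $\mathfrak d_L(x,y)>0$ there is $t\in\mathbb N$ with $\mathfrak d_L(F^t(x),F^t(y))>\varepsilon$. *)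

(* Defs.v *)
From Stdlib Require Import Reals.
From Coquelicot Require Import Coquelicot.
From mathcomp Require Import all_boot.

Set Implicit Arguments.
Unset Strict Implicit.
Unset Printing Implicit Defensive.
Local Open Scope nat_scope.

Definition factor (A : Type) (x : nat -> A) (i j : nat) : seq A :=
  map x (iota i (j - i)).

Fixpoint lcs (A : eqType) (u v : seq A) : nat :=
  match u with
  | [::] => 0
  | a :: u' =>
    (fix lcs_aux (v : seq A) : nat :=
       match v with
       | [::] => 0
       | b :: v' =>
         if a == b then (lcs u' v').+1
         else maxn (lcs u' (b :: v')) (lcs_aux v')
       end) v
  end.

(* Levenshtein distance d_L(u,v) = (|u|+|v|)/2 - lcs(u,v), as a real *)
Definition dL (A : eqType) (u v : seq A) : R :=
  Rminus (Rdiv (INR (size u + size v)) 2) (INR (lcs u v)).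

Definition feldman (A : eqType) (x y : nat -> A) : Rbar :=
  LimSup_seq (fun l => Rdiv (dL (factor x 0 l) (factor y 0 l)) (INR l)).

(* Cellular automaton with diameter delta and local rule f
   (f is applied to words of length delta only). *)
Definition CA (A : Type) (delta : nat) (f : seq A -> A) (x : nat -> A) : nat -> A :=
  fun i => f (factor x i (i + delta)).

Definition feldman_expansive (A : eqType) (F : (nat -> A) -> (nat -> A)) : Prop :=
  exists eps : R, Rlt R0 eps /\
    forall x y : nat -> A, Rbar_lt (Rbar.Finite R0) (feldman x y) ->
      exists t : nat, Rbar_lt (Rbar.Finite eps) (feldman (iter t F x) (iter t F y)).

(* Main.v *)
Require Import Defs.
From Stdlib Require Import Reals.
From Coquelicot Require Import Coquelicot.
From mathcomp Require Import all_boot.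
From mathcomp Require Import zify.
Local Open Scope nat_scope.

Lemma lcs_cons2 (A : eqType) (a b : A) u v : lcs (a :: u) (b :: v) =
  if a == b then (lcs u v).+1 else maxn (lcs u (b :: v)) (lcs (a :: u) v).
Proof. by []. Qed.

Lemma lcs_nseq (A : eqType) (c : A) n w :
  lcs (nseq n c) w = minn n (count_mem c w).
Proof.
elim: n w => [|n IH] w; first by rewrite min0n.
elim: w => [|b w IHw]; first by rewrite minn0.
have IHw' : lcs (c :: nseq n c) w = minn n.+1 (count_mem c w) := IHw.
have -> : nseq n.+1 c = c :: nseq n c by [].
rewrite lcs_cons2 IHw' !IH /= (eq_sym b c).
case: (c =P b) => [->|_] /=; lia.
Qed.

Lemma iter_local (A : Type) (delta : nat) (f : seq A -> A) t x y i i' :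
  (forall j, j <= t * (delta - 1) -> x (i + j) = y (i' + j)) ->
  iter t (CA delta f) x i = iter t (CA delta f) y i'.
Proof.
elim: t i i' => [|t IH] i i' H /=.
  by have := H 0 (leq0n _); rewrite !addn0.
rewrite /CA /factor !addKn.
have E : forall m, iota m delta = map (addn m) (iota 0 delta).
  by move=> m; rewrite -iotaDl addn0.
rewrite (E i) (E i') -!map_comp; congr f; apply/eq_in_map => k.
rewrite mem_iota => /andP[_ hk] /=.
apply: IH => j hj; rewrite -!addnA; apply: H.
rewrite mulSn; apply: leq_add => //. lia.
Qed.

From Stdlib Require Import FunctionalExtensionality Lra.

Lemma feldman_const (A : eqType) (x z : nat -> A) (c : A) :
  (forall i, x i = c) ->
  feldman x z =
  LimSup_seq (fun l => Rdiv (INR (count (fun i => z i != c) (iota 0 l))) (INR l)).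
Proof.
move=> Hx; rewrite /feldman; congr LimSup_seq.
apply: functional_extensionality => l; congr Rdiv.
rewrite /dL /factor subn0.
have -> : map x (iota 0 l) = nseq l c.
  have G : forall s, map x s = nseq (size s) c by elim=> //= a s ->; rewrite Hx.
  by rewrite G size_iota.
rewrite lcs_nseq size_nseq size_map size_iota count_map.
set k := count _ (iota 0 l).
set k' := count _ (iota 0 l).
have Hkk : k + k' = l.
  by have := count_predC (fun i => z i == c) (iota 0 l); rewrite size_iota.
have -> : minn l k = k by apply/minn_idPr; rewrite -Hkk leq_addr.
rewrite -Hkk !plus_INR; lra.
Qed.

Local Open Scope R_scope.

Lemma limsup_le_ev (u : nat -> R) (e : R) (n0 : nat) :
  (forall n, (n0 <= n)%N -> Rle (u n) e) -> Rbar_le (LimSup_seq u) (Rbar.Finite e).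
Proof.
move=> H; rewrite -(LimSup_seq_const e); apply: LimSup_le.
by exists n0 => n /leP hn; apply: H.
Qed.

Lemma limsup_pos (u : nat -> R) (k : R) : 0 < k ->
  (forall m, exists n, (m <= n)%N /\ Rle k (u n)) -> Rbar_lt (Rbar.Finite 0) (LimSup_seq u).
Proof.
move=> hk H; rewrite LimSup_InfSup_seq.
apply: (Rbar_lt_le_trans _ (Rbar.Finite k)); first by simpl; lra.
have -> : Rbar.Finite k = Inf_seq (fun _ => Rbar.Finite k).
  symmetry; apply: is_inf_seq_unique => eps /=; split.
    move=> _; case: eps => e he /=; lra.
  by exists O; case: eps => e he /=; lra.
apply: Inf_seq_le => m.
have [n [hmn hn]] := H m.
apply: (Sup_seq_minor_le _ _ (n - m)%N).
have -> : ((n - m) + m)%coq_nat = n by apply: subnK.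
exact: hn.
Qed.

Close Scope R_scope.
Local Open Scope nat_scope.
Definition Pb (N i : nat) : bool :=
  has (fun k => (N * 2 ^ k <= i) && (i < N.+1 * 2 ^ k)) (iota 0 i.+1).
Definition Ik (N k i : nat) : bool := ((N - 1) * 2 ^ k <= i) && (i < N.+1 * 2 ^ k).
Definition QK (N K i : nat) : bool := has (fun k => Ik N k i) (iota 0 K).

Lemma iota_snoc n : iota 0 n.+1 = rcons (iota 0 n) n.
Proof. by rewrite -addn1 iotaD /= cats1. Qed.

Lemma count_le_in (T : eqType) (p q : pred T) (s : seq T) :
  (forall x, x \in s -> p x -> q x) -> count p s <= count q s.
Proof.
elim: s => //= x s IH H.
apply: leq_add; last by apply: IH => z hz; apply: H; rewrite inE hz orbT.
case hp: (p x) => //=; by rewrite (H x (mem_head _ _) hp).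
Qed.

Lemma count_interval lo hi l :
  count (fun i => (lo <= i) && (i < hi)) (iota 0 l) <= hi - lo.
Proof.
suff : count (fun i => (lo <= i) && (i < hi)) (iota 0 l) <= minn l hi - lo.
  move=> h; apply: (leq_trans h); lia.
elim: l => [|l IH] //.
rewrite iota_snoc -cats1 count_cat /=.
case: (leqP lo l) => hlo; case: (ltnP l hi) => hhi /=; lia.
Qed.

Lemma count_QK N K l : 0 < N -> count (QK N K) (iota 0 l) <= 2 ^ K.+1.
Proof.
move=> hN; elim: K => [|K IH].
  by rewrite /QK /= (eq_count (a2 := pred0)) ?count_pred0.
have E : QK N K.+1 =1 predU (QK N K) (Ik N K).
  by move=> i; rewrite /QK iota_snoc -cats1 has_cat /= orbF.
rewrite (eq_count E).
apply: (leq_trans (n := count (QK N K) (iota 0 l) + count (Ik N K) (iota 0 l))).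
  by rewrite -count_predUI leq_addr.
rewrite expnS mul2n -addnn; apply: leq_add => //.
apply: (leq_trans (count_interval ((N - 1) * 2 ^ K) (N.+1 * 2 ^ K) l)).
rewrite -mulnBl expnS; apply: leq_mul => //; lia.
Qed.

Lemma exK N l : 1 < N -> exists K, l <= (N - 1) * 2 ^ K /\ (N - 1) * 2 ^ K <= (N - 1) + 2 * l.
Proof.
move=> hN; elim: l => [|l [K [h1 h2]]].
  exists 0; rewrite expn0 muln1; lia.
have hq : 1 <= (N - 1) * 2 ^ K by rewrite muln_gt0 expn_gt0; lia.
case: (ltnP l ((N - 1) * 2 ^ K)) => hl.
  exists K; lia.
exists K.+1; rewrite expnS mulnCA; lia.
Qed.

Lemma claim3 N K T i : 1 < N -> N.+1 * 2 ^ T <= i -> i < (N - 1) * 2 ^ K ->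
  has (fun j => Pb N (i + j)) (iota 0 T.+1) -> QK N K i.
Proof.
move=> hN h0 h1 /hasP[j]; rewrite mem_iota => /andP[_ hj] /hasP[k _] /andP[hk1 hk2].
have hTk : 2 ^ T < 2 ^ k.
  rewrite -(ltn_pmul2l (ltn0Sn N)); lia.
rewrite ltn_exp2l // in hTk.
have hk : k < 2 ^ k := ltn_expl k (ltnSn 1).
have E : N * 2 ^ k = (N - 1) * 2 ^ k + 2 ^ k.
  by rewrite -{1}(@subnK 1 N) ?mulnDl ?mul1n //; lia.
have hlo : (N - 1) * 2 ^ k <= i by lia.
apply/hasP; exists k; last by rewrite /Ik hlo /=; lia.
rewrite mem_iota /= add0n.
rewrite -(ltn_exp2l _ _ (ltnSn 1)) -(@ltn_pmul2l (N - 1)); last lia.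
lia.
Qed.

Lemma count_lower N k : 0 < N -> 2 ^ k <= count (Pb N) (iota 0 (N.+1 * 2 ^ k)).
Proof.
move=> hN; rewrite mulSn addnC iotaD count_cat add0n.
have -> : count (Pb N) (iota (N * 2 ^ k) (2 ^ k)) = 2 ^ k.
  apply/eqP; rewrite -[X in _ == X](size_iota (N * 2 ^ k)) -all_count.
  apply/allP => i; rewrite mem_iota => /andP[h1 h2].
  apply/hasP; exists k.
    rewrite mem_iota /= add0n ltnS.
    have := ltn_expl k (ltnSn 1).
    have : 2 ^ k <= N * 2 ^ k by rewrite leq_pmull.
    lia.
  rewrite h1 /=; rewrite mulSn; lia.
by rewrite leq_addl.
Qed.

Open Scope R_scope.

Lemma R_low (m c l : nat) : (0 < m)%N -> (0 < l)%N -> (l <= m * c)%N ->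
  Rle (Rdiv 1 (INR m)) (Rdiv (INR c) (INR l)).
Proof.
move=> /ltP hm /ltP hl /leP hlc.
have Hm : 0 < INR m by apply: lt_0_INR.
have Hl : 0 < INR l by apply: lt_0_INR.
have H : INR l <= INR m * INR c by rewrite -mult_INR; apply: le_INR.
have h : / INR m * / INR l > 0 by apply: Rmult_lt_0_compat; apply: Rinv_0_lt_compat.
replace (1 / INR m) with (INR l * (/ INR m * / INR l)) by (field; lra).
replace (INR c / INR l) with (INR m * INR c * (/ INR m * / INR l)) by (field; lra).
apply: Rmult_le_compat_r; lra.
Qed.

Lemma R_up (n cnt C l : nat) (eps : R) : 0 < eps -> (0 < n)%N ->
  8 <= INR n * eps -> 2 * INR C <= INR l * eps -> (0 < l)%N ->
  (n * cnt <= n * C + 4 * l)%N -> Rle (Rdiv (INR cnt) (INR l)) eps.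
Proof.
move=> he /ltP hn h8 hC /ltP hl /leP H.
have Hn : 0 < INR n by apply: lt_0_INR.
have Hl : 0 < INR l by apply: lt_0_INR.
have H' : INR n * INR cnt <= INR n * INR C + 4 * INR l.
  have := le_INR _ _ H; rewrite !plus_INR !mult_INR.
  by simpl; lra.
have H2 : INR n * INR cnt <= INR n * (eps * INR l) by nra.
have H3 : INR cnt <= eps * INR l.
  by apply: (Rmult_le_reg_l (INR n)).
apply: (Rmult_le_reg_r (INR l)) => //.
by rewrite /Rdiv Rmult_assoc Rinv_l; lra.
Qed.

Lemma L1 (eps : R) : 0 < eps -> exists N, (3 < N)%N /\ 8 <= INR (N - 1) * eps.
Proof.
move=> he.
have [N hN] := INR_unbounded (8 / eps + 3).
have he' : 0 < 8 / eps by apply: Rdiv_lt_0_compat; lra.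
have hN3 : (3 < N)%N.
  apply/ltP; apply: INR_lt; have -> : INR 3 = 3 by simpl; lra.
  lra.
exists N; split => //.
rewrite minus_INR; last by apply/leP; apply: (leq_trans _ hN3).
have : 8 / eps * eps = 8 by field; lra.
have : INR N - INR 1 > 8 / eps by simpl; lra.
nra.
Qed.

Lemma L2 (C : nat) (eps : R) : 0 < eps ->
  exists n0, forall l, (n0 < l)%N -> 2 * INR C <= INR l * eps.
Proof.
move=> he.
have [n0 hn0] := INR_unbounded (2 * INR C / eps).
exists n0 => l hl.
have hl' : INR n0 < INR l by apply: lt_INR; apply/ltP.
have := Rmult_lt_compat_r eps _ _ he (Rlt_trans _ _ _ hn0 hl').
rewrite /Rdiv Rmult_assoc Rinv_l; lra.
Qed.

Definition kN (N : nat) : R := 1 / INR N.+1.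

Lemma kN_pos N : 0 < kN N.
Proof. apply: Rdiv_lt_0_compat; first lra. by apply: lt_0_INR; apply/ltP. Qed.

Close Scope R_scope.

Theorem mainTheorem16 (A : finType) (hA : 1 < #|A|) (delta : nat)
  (hdelta : 0 < delta) (f : seq A -> A) :
  ~ feldman_expansive (CA delta f) /\
  (forall eps : R, Rlt R0 eps ->
     exists x y : nat -> A, Rbar_lt (Rbar.Finite R0) (feldman x y) /\
       forall t : nat,
         Rbar_le (feldman (iter t (CA delta f) x) (iter t (CA delta f) y)) (Rbar.Finite eps)).
Proof.
have part2 : forall eps : R, Rlt R0 eps ->
     exists x y : nat -> A, Rbar_lt (Rbar.Finite R0) (feldman x y) /\
       forall t : nat,
         Rbar_le (feldman (iter t (CA delta f) x) (iter t (CA delta f) y)) (Rbar.Finite eps).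
  move=> eps he.
  have [a [b [_ _ hab]]] := card_gt1P hA.
  have [N [hN3 h8]] := L1 eps he.
  have hN1 : 1 < N by lia.
  set y := fun i => if Pb N i then b else a.
  have Ey : forall l, count (fun i => y i != a) (iota 0 l) = count (Pb N) (iota 0 l).
    move=> l; apply: eq_count => i; rewrite /y.
    by case: (Pb N i); rewrite ?eqxx // eq_sym.
  exists (fun _ => a), y; split.
    rewrite (@feldman_const _ _ _ a) //.
    apply: (@limsup_pos _ (kN N)); first exact: kN_pos.
    move=> m; exists (N.+1 * 2 ^ m); split.
      have := ltn_expl m (ltnSn 1).
      have : 2 ^ m <= N.+1 * 2 ^ m by rewrite leq_pmull.
      lia.
    rewrite Ey; apply: R_low => //.
      by rewrite muln_gt0 expn_gt0.
    by rewrite leq_pmul2l // count_lower //; lia.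
  move=> t.
  set F := CA delta f.
  set c := iter t F (fun _ => a) 0.
  rewrite (@feldman_const _ _ _ c); last first.
    by move=> i; apply: iter_local.
  set T := t * (delta - 1).
  set i0 := N.+1 * 2 ^ T.
  have [n0 hn0] := L2 (i0 + 2) eps he.
  apply: (@limsup_le_ev _ _ n0.+1) => l hl.
  have [K [hK1 hK2]] := @exK N l hN1.
  have hcnt : count (fun i => iter t F y i != c) (iota 0 l) <= i0 + 2 ^ K.+1.
    apply: (leq_trans (@count_le_in _ _ (predU (fun i => i < i0) (QK N K)) _ _)).
      move=> i; rewrite mem_iota add0n => /andP[_ hil] hneq /=.
      case: (ltnP i i0) => //= hi0.
      apply: (@claim3 N K T) => //; first lia.
      apply/negPn/negP => hnone.
      move/negP: hneq; apply; apply/eqP.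
      apply: iter_local => j hj.
      have : ~~ Pb N (i + j).
        by move/hasPn: hnone; apply; rewrite mem_iota add0n ltnS.
      by rewrite /y => /negbTE ->.
    apply: (leq_trans (n := count (fun i => i < i0) (iota 0 l) + count (QK N K) (iota 0 l))).
      by rewrite -count_predUI leq_addr.
    apply: leq_add; last by apply: count_QK; lia.
    have := count_interval 0 i0 l; rewrite subn0.
    by rewrite (eq_count (a2 := fun i => i < i0)).
  have hn : 0 < N - 1 by lia.
  apply: (@R_up (N - 1) _ (i0 + 2)) => //; last first.
  - have : (N - 1) * count (fun i => iter t F y i != c) (iota 0 l)
           <= (N - 1) * (i0 + 2 ^ K.+1) by rewrite leq_mul2l hcnt orbT.
    rewrite expnS mulnDr mulnCA.
    move: hK2; set q := (N - 1) * 2 ^ K; lia.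
  - lia.
  - exact: hn0.
split => //.
move=> [eps [he H]].
have [x [y [hpos hall]]] := part2 eps he.
have [t ht] := H x y hpos.
exact: (Rbar_lt_not_le _ _ ht (hall t)).
Qed.
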